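(* Let $\ell\ge 2$, $K\ge 1$ and $C_0>0$. There is a constant $M=M(K,\ell,C_0)$ such that the following holds. Let $G$ be a bipartite $n$-vertex graph containing no copy of $C_{2\ell}^{\square}$, with average degree $d\ge C_0n^{1/2}$ and maximum degree at most $Kd$, and let $uv\in E(G)$. Then the number of rich $4$-tuples $(w,z,w',z')$ such that $uz,uz',vw,vw'\in E(G)$ and $d(u,w),d(u,w'),d(v,z),d(v,z')\le C_0d^{1/2}$ is at most $Md^2$.
   Context: $d(a,b)$ denotes the number of common neighbours of $a,b$. For distinct vertices $w,z,w',z'$, the $4$-tuple $(w,z,w',z')$ is rich if $wz,w'z'\in E(G)$ and there are at least $4\ell$ pairwise vertex-disjoint edges $xy\in E(G)$ with $wx,xw',zy,yz'\in E(G)$. $C_{2\ell}^{\square}$ consists of two vertex-disjoint $2\ell$-cycles $a_1\cdots a_{2\ell}a_1$, $b_1\cdots b_{2\ell}b_1$ plus the edges $a_ib_i$. *)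

(* Defs.v *)
From HB Require Import structures.
From mathcomp Require Import all_boot all_order all_algebra.
From mathcomp Require Import Rstruct.
From Stdlib Require Rdefinitions.
Set Implicit Arguments. Unset Strict Implicit. Unset Printing Implicit Defensive.
Import Order.TTheory GRing.Theory Num.Theory.

Local Open Scope ring_scope.

Section Graphs.
Variable T : finType.
Variable e : rel T.

Definition simple_graph : Prop := symmetric e /\ irreflexive e.

Definition bipartite : Prop :=
  exists f : T -> bool, forall x y, e x y -> f x != f y.

Definition deg (x : T) : nat := #|[set y | e x y]|.

Definition avg_deg : Rdefinitions.R :=
  (\sum_(x : T) deg x)%:R / (#|T|)%:R.

Definition codeg (a b : T) : nat := #|[set c | e a c && e b c]|.

(* G contains a (not necessarily induced) copy of C_{2l}^square:
   two vertex-disjoint 2l-cycles a_0..a_{2l-1}, b_0..b_{2l-1} plus edges a_i b_i;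
   all 4l vertices distinct. *)
Definition has_prism (l : nat) : Prop :=
  exists a b : nat -> T,
    [/\ (forall i j : nat, (i < 2 * l)%N -> (j < 2 * l)%N -> a i = a j -> i = j),
        (forall i j : nat, (i < 2 * l)%N -> (j < 2 * l)%N -> b i = b j -> i = j),
        (forall i j : nat, (i < 2 * l)%N -> (j < 2 * l)%N -> a i != b j),
        (forall i : nat, (i < 2 * l)%N -> e (a i) (b i)) &
      (forall i : nat, (i < 2 * l)%N ->
         e (a i) (a ((i.+1) %% (2 * l))%N) /\ e (b i) (b ((i.+1) %% (2 * l))%N))].

Definition rich (l : nat) (w z w' z' : T) : bool :=
  [&& uniq [:: w; z; w'; z'], e w z, e w' z' &
   [exists S : {set T * T},
      [&& (4 * l <= #|S|)%N,
          [forall p in S,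
             [&& e p.1 p.2, e w p.1, e p.1 w', e z p.2 & e p.2 z']] &
          [forall p in S, forall q in S,
             (p != q) ==> [&& p.1 != q.1, p.1 != q.2, p.2 != q.1 & p.2 != q.2]]]]].

Definition counted_tuples (l : nat) (C0 : Rdefinitions.R) (u v : T)
  : {set T * T * T * T} :=
  [set t : T * T * T * T |
     let: (w, z, w', z') := t in
     [&& rich l w z w' z',
         e u z, e u z', e v w, e v w',
         (codeg u w)%:R <= C0 * Num.sqrt avg_deg,
         (codeg u w')%:R <= C0 * Num.sqrt avg_deg,
         (codeg v z)%:R <= C0 * Num.sqrt avg_deg &
         (codeg v z')%:R <= C0 * Num.sqrt avg_deg]].

End Graphs.

(* Main.v *)
Require Import Defs.
From HB Require Import structures.
From mathcomp Require Import all_boot all_order all_algebra.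
From mathcomp Require Import Rstruct.
From mathcomp Require Import ring lra zify.
From Stdlib Require Rdefinitions.
Import Order.TTheory GRing.Theory Num.Theory.
Local Open Scope ring_scope.
Set Implicit Arguments. Unset Strict Implicit.

Notation RR := Rdefinitions.R.

Lemma cardU_le (T : finType) (A B : {set T}) : (#|A :|: B| <= #|A| + #|B|)%N.
Proof. by rewrite -cardsUI leq_addr. Qed.

Section Degen.
Variables (Q : finType) (R : rel Q) (D : RR).
Hypothesis symR : symmetric R.

Definition pairs (P : {set Q}) := [set pq in setX P P | R pq.1 pq.2].
Definition nbr (S : {set Q}) p := [set q in S | R p q].

Lemma degen_aux n (P : {set Q}) : #|P| = n ->
  (exists S : {set Q}, [/\ S \subset P, S != set0 &
       forall p, p \in S -> D < #|nbr S p|%:R])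
  \/ #|pairs P|%:R <= 2 * D * #|P|%:R.
Proof.
elim: n P => [|n IH] P HP.
  right; rewrite HP mulr0.
  have -> : pairs P = set0.
    apply/setP => pq; rewrite !inE.
    by move/cards0_eq: HP => ->; rewrite !inE.
  by rewrite cards0.
have [/existsP [p /andP [pP hp]]|hno] :=
  boolP [exists p in P, #|nbr P p|%:R <= D].
  have HP' : #|P :\ p| = n.
    by move: HP; rewrite (cardsD1 p P) pP add1n => -[].
  case: (IH _ HP') => [[S [sS nS hS]]|hr].
    left; exists S; split => //.
    by apply: (subset_trans sS); apply: subsetDl.
  right.
  have sub : pairs P \subset (pairs (P :\ p) :|: [set (p, q) | q in nbr P p])
                 :|: [set (q, p) | q in nbr P p].
    apply/subsetP => -[x y]; rewrite !inE /= => /andP [/andP [xP yP] rxy].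
    have [xp|xp] := eqVneq x p.
      subst x; apply/orP; left; apply/orP; right.
      by apply/imsetP; exists y => //; rewrite inE yP rxy.
    have [yp|yp] := eqVneq y p.
      subst y; apply/orP; right.
      by apply/imsetP; exists x => //; rewrite inE xP symR rxy.
    by rewrite xP yP rxy.
  have c1 := subset_leq_card sub.
  have c2 := leq_trans c1 (cardU_le _ _).
  have c3 := leq_trans c2 (leq_add (cardU_le _ _) (leqnn _)).
  have c4 := leq_trans c3 (leq_add (leq_add (leqnn _) (leq_imset_card _ _))
                                   (leq_imset_card _ _)).
  have := c4; rewrite -(ler_nat RR) => c5.
  apply: (le_trans c5); rewrite HP -addn1 !natrD.
  move: hr; rewrite HP' => hr; lra.
left; exists P; split => //.
  by apply/set0Pn; case: (set_0Vmem P) => [P0|[x xP]];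
    [move: HP; rewrite P0 cards0 | exists x].
move=> p pP; move/existsPn: hno => /(_ p); rewrite pP /=.
by rewrite -ltNge.
Qed.

Lemma degen (P : {set Q}) :
  (exists S : {set Q}, [/\ S \subset P, S != set0 &
       forall p, p \in S -> D < #|nbr S p|%:R])
  \/ #|pairs P|%:R <= 2 * D * #|P|%:R.
Proof. exact: (@degen_aux #|P|). Qed.
End Degen.
Definition conn (T : finType) (e : rel T) (p q c : T * T) : bool :=
  [&& e c.1 c.2, e p.1 c.1, e c.1 q.1, e p.2 c.2 & e c.2 q.2].

Lemma nth_catR (X : Type) (x : X) s1 s2 n : nth x (s1 ++ s2) (size s1 + n) = nth x s2 n.
Proof. by elim: s1. Qed.

Lemma nth_catL (X : Type) (x : X) s1 s2 n : (n < size s1)%N -> nth x (s1 ++ s2) n = nth x s1 n.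
Proof. by move=> h; rewrite nth_cat h. Qed.

Lemma split_idx l i : (i < 2 * l)%N ->
  i = 0%N \/ (exists2 j, (j < l)%N & i = j.*2.+1) \/ (exists2 j, (j < l.-1)%N & i = j.*2.+2).
Proof.
move=> hi; have := odd_double_half i.
case: (odd i) => /= h.
  right; left; exists i./2; lia.
case: (i./2) h => [|k] h; first by left; lia.
right; right; exists k; lia.
Qed.

Lemma half_odd j : (j.*2.+1)./2 = j. Proof. by rewrite /= uphalf_double. Qed.
Lemma half_even j : (j.*2.+2)./2 = j.+1. Proof. by rewrite /= half_double. Qed.

Section Prism.
Variables (T : finType) (e : rel T) (l : nat).
Hypothesis sym : symmetric e.

Lemma build_prism (u v : T) (W cs : seq (T * T)) (p0 : T * T) :
  e u v -> (2 <= l)%N -> size W = l -> size cs = l.-1 ->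
  (forall j, (j < l)%N -> [&& e v (nth p0 W j).1, e u (nth p0 W j).2
                              & e (nth p0 W j).1 (nth p0 W j).2]) ->
  (forall j, (j < l.-1)%N -> conn e (nth p0 W j) (nth p0 W j.+1) (nth p0 cs j)) ->
  uniq (v :: u :: map fst W ++ map snd W ++ map fst cs ++ map snd cs) ->
  has_prism e l.
Proof.
move=> euv l2 sW scs hW hC uL.
set L := v :: u :: _ in uL.
pose a i := if i == 0%N then v else if odd i then (nth p0 W i./2).1
            else (nth p0 cs (i./2).-1).1.
pose b i := if i == 0%N then u else if odd i then (nth p0 W i./2).2
            else (nth p0 cs (i./2).-1).2.
pose pa i := if i == 0%N then 0%N else if odd i then (2 + i./2)%N
            else (2 + (l + (l + (i./2).-1)))%N.
pose pb i := if i == 0%N then 1%N else if odd i then (2 + (l + i./2))%N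
            else (2 + (l + (l + (l.-1 + (i./2).-1))))%N.
have sL : size L = (2 + (l + (l + (l.-1 + l.-1))))%N.
  by rewrite /L /= !size_cat !size_map sW scs.
have ha : forall i, (i < 2 * l)%N -> a i = nth v L (pa i) /\ (pa i < size L)%N.
  move=> i /split_idx [->|[[j hj ->]|[j hj ->]]]; first by rewrite sL.
    rewrite /a /pa /= odd_double /= uphalf_double; split;
      last by rewrite !size_cat !size_map sW scs; lia.
    rewrite add0n nth_catL ?size_map ?sW //.
    by rewrite (nth_map p0) // sW.
  rewrite /a /pa /= odd_double /= half_double; split;
    last by rewrite !size_cat !size_map sW scs; lia.
  have h1 : (0 + (l + (l + j)) = size (map fst W) + (size (map snd W) + j))%N
    by rewrite !size_map sW.
  rewrite h1 nth_catR nth_catR nth_catL ?size_map ?scs //.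
  by rewrite (nth_map p0) // scs.
have hb : forall i, (i < 2 * l)%N -> b i = nth v L (pb i) /\ (pb i < size L)%N.
  move=> i /split_idx [->|[[j hj ->]|[j hj ->]]]; first by rewrite sL.
    rewrite /b /pb /= odd_double /= uphalf_double; split;
      last by rewrite !size_cat !size_map sW scs; lia.
    have h1 : (0 + (l + j) = size (map fst W) + j)%N by rewrite !size_map sW.
    rewrite h1 nth_catR nth_catL ?size_map ?sW //.
    by rewrite (nth_map p0) // sW.
  rewrite /b /pb /= odd_double /= half_double; split;
    last by rewrite !size_cat !size_map sW scs; lia.
  have h1 : (0 + (l + (l + (l.-1 + j))) = size (map fst W) + (size (map snd W) +
             (size (map fst cs) + j)))%N by rewrite !size_map sW scs.
  rewrite h1 nth_catR nth_catR nth_catR.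
  by rewrite (nth_map p0) // scs.
have pinj : forall i j, (i < 2 * l)%N -> (j < 2 * l)%N -> pa i = pa j -> i = j.
  move=> i j /split_idx [->|[[i' hi ->]|[i' hi ->]]]
             /split_idx [->|[[j' hj ->]|[j' hj ->]]];
    rewrite /pa /= ?odd_double /= ?uphalf_double ?half_double; lia.
have pbinj : forall i j, (i < 2 * l)%N -> (j < 2 * l)%N -> pb i = pb j -> i = j.
  move=> i j /split_idx [->|[[i' hi ->]|[i' hi ->]]]
             /split_idx [->|[[j' hj ->]|[j' hj ->]]];
    rewrite /pb /= ?odd_double /= ?uphalf_double ?half_double; lia.
have pab : forall i j, (i < 2 * l)%N -> (j < 2 * l)%N -> pa i != pb j.
  move=> i j /split_idx [->|[[i' hi ->]|[i' hi ->]]]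
             /split_idx [->|[[j' hj ->]|[j' hj ->]]];
    rewrite /pa /pb /= ?odd_double /= ?uphalf_double ?half_double; apply/eqP; lia.
exists a, b; split.
- move=> i j hi hj; have [-> s1] := ha i hi; have [-> s2] := ha j hj.
  by move/eqP; rewrite nth_uniq // => /eqP; apply: pinj.
- move=> i j hi hj; have [-> s1] := hb i hi; have [-> s2] := hb j hj.
  by move/eqP; rewrite nth_uniq // => /eqP; apply: pbinj.
- move=> i j hi hj; have [-> s1] := ha i hi; have [-> s2] := hb j hj.
  by rewrite nth_uniq // pab.
- move=> i /split_idx [->|[[j hj ->]|[j hj ->]]].
  + by rewrite /a /b /= sym.
  + rewrite /a /b /= odd_double /= uphalf_double.
    by have /and3P [_ _ ->] := hW j hj.
  + rewrite /a /b /= odd_double /= half_double.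
    by have /and5P [-> _ _ _ _] := hC j hj.
- move=> i hi; have := hi => /split_idx [->|[[j hj ->]|[j hj ->]]].
  + rewrite modn_small; last by lia.
    rewrite /a /b /=.
    have l0 : (0 < l)%N by lia.
    by have /and3P [-> -> _] := hW 0%N l0.
  + have [jl|jl] := ltnP j l.-1.
      rewrite modn_small; last by lia.
      rewrite /a /b /= odd_double /= uphalf_double half_double.
      by have /and5P [_ -> _ -> _] := hC j jl.
    have -> : ((j.*2.+1).+1 %% (2 * l) = 0)%N.
      have -> : ((j.*2.+1).+1 = 2 * l)%N by lia.
      by rewrite modnn.
    rewrite /a /b /= odd_double /= uphalf_double.
    by have /and3P [h1 h2 _] := hW j hj; rewrite sym h1 sym h2.
  + rewrite modn_small; last by lia.
    have -> : ((j.*2.+2).+1 = (j.+1).*2.+1)%N by rewrite doubleS.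
    rewrite /a /b /= odd_double /= uphalf_double half_double.
    by have /and5P [_ _ -> _ ->] := hC j hj.
Qed.
End Prism.
Section Greedy.
Variables (T : finType) (e : rel T).
Hypothesis irr : irreflexive e.


Definition disj (S0 : {set T * T}) : Prop :=
  forall p q, p \in S0 -> q \in S0 -> p != q ->
    [&& p.1 != q.1, p.1 != q.2, p.2 != q.1 & p.2 != q.2].

Lemma avoid (S0 : {set T * T}) (L : seq T) : disj S0 -> (size L < #|S0|)%N ->
  exists c, [/\ c \in S0, c.1 \notin L & c.2 \notin L].
Proof.
move=> dS hsz.
pose Kd := [set c in S0 | (c.1 \in L) || (c.2 \in L)].
pose g (c : T * T) := if c.1 \in L then c.1 else c.2.
have inj : {in Kd &, injective g}.
  move=> p q; rewrite !inE => /andP [pS _] /andP [qS _] hg.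
  apply/eqP; apply/negPn/negP => npq.
  have := dS p q pS qS npq; rewrite /g in hg.
  by case: ifP hg => _; case: ifP => _ ->; rewrite !eqxx /= ?andbF.
have cK : (#|Kd| <= size L)%N.
  rewrite -(card_in_imset inj).
  apply: (leq_trans _ (card_size L)).
  apply: subset_leq_card; apply/subsetP => x /imsetP [c]; rewrite inE.
  move=> /andP [_ h] ->; rewrite /g; case: ifP => // h1.
  by move: h; rewrite h1.
have : ~~ (S0 \subset Kd).
  apply/negP => /subset_leq_card h.
  by move: (leq_ltn_trans (leq_trans h cK) hsz); rewrite ltnn.
case/subsetPn => c cS; rewrite inE cS /= negb_or => /andP [h1 h2].
by exists c.
Qed.

Variable l : nat.
Variable Rc : rel (T * T).
Hypothesis Hc : forall p q, Rc p q -> exists S0 : {set T * T},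
  [/\ (4 * l <= #|S0|)%N, forall c, c \in S0 -> conn e p q c & disj S0].

Lemma greedy (ps : seq (T * T)) (p0 : T * T) (L0 : seq T) :
  path Rc p0 ps -> uniq L0 -> (size L0 + 2 * size ps < 4 * l + 2)%N ->
  exists cs : seq (T * T), [/\ size cs = size ps,
    forall j, (j < size ps)%N ->
       conn e (nth p0 (p0 :: ps) j) (nth p0 ps j) (nth p0 cs j)
    & uniq (L0 ++ map fst cs ++ map snd cs)].
Proof.
elim: ps p0 => [|q ps IH] p0 /=.
  by move=> _ uL _; exists [::]; split => //; rewrite cats0.
move=> /andP [r0 pth] uL hsz.
have [cs' [s' hc' u']] : exists cs' : seq (T * T), [/\ size cs' = size ps,
    forall j, (j < size ps)%N ->
       conn e (nth q (q :: ps) j) (nth q ps j) (nth q cs' j)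
    & uniq (L0 ++ map fst cs' ++ map snd cs')].
  by apply: IH => //; lia.
have [S0 [c4 cc dS]] := Hc r0.
have [c [cS c1 c2]] : exists c, [/\ c \in S0,
    c.1 \notin (L0 ++ map fst cs' ++ map snd cs') &
    c.2 \notin (L0 ++ map fst cs' ++ map snd cs')].
  apply: avoid => //; rewrite !size_cat !size_map s'.
  by apply: (leq_trans _ c4); lia.
exists (c :: cs'); split => /=; first by rewrite s'.
  case=> [|j] hj /=; first by apply: cc.
  have := hc' j hj.
  have e1 : nth p0 (q :: ps) j = nth q (q :: ps) j
    by apply: set_nth_default => /=; lia.
  have e2 : nth p0 ps j = nth q ps j by apply: set_nth_default; lia.
  have e3 : nth p0 cs' j = nth q cs' j by apply: set_nth_default; lia.
  by rewrite e1 e2 e3.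
have pe : perm_eq (L0 ++ c.1 :: [seq i.1 | i <- cs'] ++ c.2 :: [seq i.2 | i <- cs'])
                  (c.1 :: c.2 :: (L0 ++ [seq i.1 | i <- cs'] ++ [seq i.2 | i <- cs'])).
  by apply/permP => a; rewrite !count_cat /= !count_cat /=; lia.
rewrite (perm_uniq pe) /= u' c2 andbT inE negb_or c1 andbT.
have := cc c cS; rewrite /conn => /andP [ec _].
by rewrite andbT; apply/eqP => h; move: ec; rewrite h irr.
Qed.
End Greedy.

Lemma codeg_self (T : finType) (e : rel T) x : codeg e x x = deg e x.
Proof. by rewrite /codeg /deg; apply: eq_card => y; rewrite !inE andbb. Qed.

Section Main.
Variables (T : finType) (e : rel T) (l : nat) (u v : T) (N : RR).
Hypotheses (sym : symmetric e) (irr : irreflexive e).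
Variable f : T -> bool.
Hypothesis bip : forall x y, e x y -> f x != f y.
Hypotheses (euv : e u v) (l2 : (2 <= l)%N) (N0 : 0 <= N).

Definition PP := [set q : T * T | [&& e v q.1, e u q.2 & e q.1 q.2] &&
   [&& q.1 != u, q.2 != v, (codeg e u q.1)%:R <= N & (codeg e v q.2)%:R <= N]].

Lemma row_bound t : #|[set q in PP | q.1 == t]|%:R <= N.
Proof.
case: (set_0Vmem [set q in PP | q.1 == t]) => [->|[q0]]; first by rewrite cards0.
rewrite !inE => /andP [/andP [_ /and4P [_ _ h _]] /eqP q0t].
rewrite q0t in h; apply: le_trans h; rewrite ler_nat /codeg.
apply: leq_trans (leq_imset_card (pair t) _).
apply: subset_leq_card; apply/subsetP => -[x y]; rewrite !inE /=.
move=> /andP [/andP [/and3P [_ h1 h2] _] /eqP xt]; subst x.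
by apply/imsetP; exists y => //; rewrite inE h1 h2.
Qed.

Lemma col_bound t : #|[set q in PP | q.2 == t]|%:R <= N.
Proof.
case: (set_0Vmem [set q in PP | q.2 == t]) => [->|[q0]]; first by rewrite cards0.
rewrite !inE => /andP [/andP [_ /and4P [_ _ _ h]] /eqP q0t].
rewrite q0t in h; apply: le_trans h; rewrite ler_nat /codeg.
apply: leq_trans (leq_imset_card (fun w => (w, t)) _).
apply: subset_leq_card; apply/subsetP => -[x y]; rewrite !inE /=.
move=> /andP [/andP [/and3P [h1 _ h2] _] /eqP yt]; subst y.
by apply/imsetP; exists x => //; rewrite inE h1 sym h2.
Qed.

Lemma PP_bound : #|PP|%:R <= #|[set y | e v y]|%:R * N.
Proof.
have -> : #|PP| = (\sum_(j in [set y | e v y]) #|[set q in PP | q.1 == j]|)%N.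
  rewrite -sum1_card (partition_big fst (mem [set y | e v y])) /=; last first.
    by move=> q; rewrite !inE => /andP [/and3P []].
  apply: eq_bigr => j _; rewrite -sum1_card; apply: eq_bigl => q.
  by rewrite !inE.
rewrite natr_sum; apply: le_trans (ler_sum _ (fun j _ => row_bound j)) _.
by rewrite sumr_const mulr_natl.
Qed.

Definition excl (W : seq (T * T)) :=
  [set q in PP | (q.1 \in map fst W) || (q.2 \in map snd W)].

Lemma excl_bound W : #|excl W|%:R <= 2 * (size W)%:R * N.
Proof.
elim: W => [|w W IH].
  have -> : excl [::] = set0 by apply/setP => q; rewrite !inE /= andbF.
  by rewrite cards0 mulr0 mul0r.
have sub : excl (w :: W) \subset ([set q in PP | q.1 == w.1] :|:
                                  [set q in PP | q.2 == w.2]) :|: excl W.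
  have mc : forall (g : T * T -> T), map g (w :: W) = g w :: map g W by [].
  apply/subsetP => q; rewrite !inE => /andP [-> h] /=.
  by move: h; case: (q.1 == w.1); case: (q.2 == w.2); rewrite /= ?orbT.
have c1 := leq_trans (subset_leq_card sub) (cardU_le _ _).
have c2 := leq_trans c1 (leq_add (cardU_le _ _) (leqnn _)).
move: c2; rewrite -(ler_nat RR) !natrD => c2.
apply: (le_trans c2).
have := row_bound w.1; have := col_bound w.2.
rewrite /= -addn1 natrD; lra.
Qed.

Definition Rc (p q : T * T) := rich e l p.1 p.2 q.1 q.2 || rich e l q.1 q.2 p.1 p.2.

Lemma Rc_sym : symmetric Rc.
Proof. by move=> p q; rewrite /Rc orbC. Qed.

Lemma rich_conn w z w' z' : rich e l w z w' z' ->
  exists S0 : {set T * T}, [/\ (4 * l <= #|S0|)%N,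
     forall c, c \in S0 -> conn e (w, z) (w', z') c & disj S0].
Proof.
case/and4P => _ _ _ /existsP [S0 /and3P [c4 /forallP h1 /forallP h2]].
exists S0; split => //.
  by move=> c cS; move: (h1 c); rewrite cS /= => /and5P [*]; apply/and5P.
move=> p q pS qS npq; move: (h2 p); rewrite pS /= => /forallP /(_ q).
by rewrite qS npq.
Qed.

Lemma Hc p q : Rc p q -> exists S0 : {set T * T},
  [/\ (4 * l <= #|S0|)%N, forall c, c \in S0 -> conn e p q c & disj S0].
Proof.
case: p q => [w z] [w' z'] /orP [|] /rich_conn [S0 [c4 hc dS]];
  exists S0; split => // c /hc //.
by rewrite /conn /= => /and5P [h1 h2 h3 h4 h5]; apply/and5P; split => //; rewrite sym.
Qed.

Lemma uniqL0 (W : seq (T * T)) : all (fun q => q \in PP) W ->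
  uniq (map fst W) -> uniq (map snd W) -> uniq (v :: u :: map fst W ++ map snd W).
Proof.
move=> /allP aW u1 u2.
have mf : forall x, x \in map fst W -> e v x && (x != u).
  move=> x /mapP [q qW ->]; move: (aW q qW); rewrite inE.
  by case/andP => /and3P [-> _ _] /and4P [-> _ _ _].
have ms : forall y, y \in map snd W -> e u y && (y != v).
  move=> y /mapP [q qW ->]; move: (aW q qW); rewrite inE.
  by case/andP => /and3P [_ -> _] /and4P [_ -> _ _].
rewrite /= cat_uniq u1 u2 !inE !mem_cat !negb_or andbT /=.
apply/and3P; split.
- apply/and3P; split.
  + by apply/eqP => h; move: euv; rewrite h irr.
  + by apply/negP => /mf; rewrite irr.
  + by apply/negP => /ms; rewrite eqxx andbF.
- apply/andP; split; first by apply/negP => /mf; rewrite eqxx andbF.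
  by apply/negP => /ms; rewrite irr.
- apply/hasPn => y /ms /andP [h1 _]; apply/negP => /mf /andP [h2 _].
  move: (bip h1) (bip h2) (bip euv).
  by case: (f u); case: (f v); case: (f y).
Qed.

Lemma no_dense (S : {set T * T}) : S \subset PP -> S != set0 ->
  (forall p, p \in S -> 2 * l%:R * N < #|nbr Rc S p|%:R) -> has_prism e l.
Proof.
move=> sSP nS hS.
have build : forall k, (k < l)%N -> exists p s, [/\ p \in S,
    all (fun q => q \in S) s, path Rc p s, size s = k &
    uniq (map fst (p :: s)) && uniq (map snd (p :: s))].
  elim=> [|k IH] hk.
    by case/set0Pn: nS => p pS; exists p, [::]; split.
  have [p [s [pS aS pth sz un]]] := IH (ltnW hk).
  have : ~~ (nbr Rc S p \subset excl (p :: s)).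
    apply/negP => /subset_leq_card; rewrite -(ler_nat RR) => h.
    have h1 := excl_bound (p :: s); have h2 := hS p pS.
    have h3 : 2 * (size (p :: s))%:R * N <= 2 * l%:R * N.
      apply: ler_wpM2r => //; apply: ler_wpM2l => //.
      by rewrite ler_nat /= sz ltnW.
    by move: (le_lt_trans (le_trans h (le_trans h1 h3)) h2); rewrite ltxx.
  case/subsetPn => q; rewrite inE => /andP [qS rpq] qex.
  have qP := subsetP sSP q qS.
  move: qex; rewrite inE qP /= negb_or => /andP [n1 n2].
  exists q, (p :: s); split => //=.
  - by rewrite pS aS.
  - by rewrite Rc_sym rpq.
  - by rewrite sz.
  - by case/andP: un => /= /andP [-> ->] /andP [-> ->]; rewrite n1 n2.
have hl : (l.-1 < l)%N by lia.
have [p [s [pS aS pth sz un]]] := build l.-1 hl.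
set W := p :: s.
have aW : all (fun q => q \in S) W by rewrite /= pS aS.
have aWP : all (fun q => q \in PP) W.
  by apply/allP => q /(allP aW) /(subsetP sSP).
case/andP: un => u1 u2.
have uL := uniqL0 aWP u1 u2.
have sW : size W = l by rewrite /= sz; lia.
have szc : (size (v :: u :: map fst W ++ map snd W) + 2 * size s < 4 * l + 2)%N.
  rewrite /= size_cat /= !size_map sz; lia.
have [cs [scs hcs ucs]] := greedy irr Hc pth uL szc.
apply: (build_prism sym (W := W) (cs := cs) (p0 := p) euv l2 sW).
- by rewrite scs sz.
- move=> j hj; have : nth p W j \in PP.
    by apply: (allP aWP); apply: mem_nth; rewrite sW.
  by rewrite inE => /andP [-> _].
- by move=> j hj; have := hcs j; rewrite sz => /(_ hj).
- by move: ucs; rewrite /= -catA.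
Qed.

End Main.

Lemma prod3 (a b c : nat) (A B C : RR) : a%:R <= A -> b%:R <= B -> c%:R <= C ->
  (a * b * c)%:R <= A * B * C.
Proof.
move=> ha hb hc; rewrite !natrM.
apply: ler_pM => //; first by rewrite -natrM ler0n.
by apply: ler_pM.
Qed.

Lemma countedP (T : finType) (e : rel T) l C0 u v w z w' z' :
  (w, z, w', z') \in counted_tuples e l C0 u v ->
  [/\ rich e l w z w' z', e u z, e u z', e v w &
   [/\ e v w', (codeg e u w)%:R <= C0 * Num.sqrt (avg_deg e),
       (codeg e u w')%:R <= C0 * Num.sqrt (avg_deg e),
       (codeg e v z)%:R <= C0 * Num.sqrt (avg_deg e) &
       (codeg e v z')%:R <= C0 * Num.sqrt (avg_deg e)]].
Proof.
rewrite /counted_tuples inE /=.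
by move=> /andP [r /andP [uz /andP [uz' /andP [vw /andP [vw' /andP [c1 /andP [c2 /andP [c3 c4]]]]]]]].
Qed.

Unset Implicit Arguments. Set Strict Implicit.

Theorem lemma5p6 (l : nat) (K C0 : Rdefinitions.R) :
  (2 <= l)%N -> 1 <= K -> 0 < C0 ->
  exists M : Rdefinitions.R,
    forall (T : finType) (e : rel T),
      simple_graph e -> bipartite e -> ~ has_prism e l ->
      C0 * Num.sqrt ((#|T|)%:R) <= avg_deg e ->
      (forall x : T, (deg e x)%:R <= K * avg_deg e) ->
      forall u v : T, e u v ->
        (#|counted_tuples e l C0 u v|)%:R <= M * (avg_deg e) ^+ 2.
Proof.
move=> l2 K1 C00.
exists ((4 * l + 4)%:R * K * C0 ^+ 2).
move=> T e [sym irr] [f bip] noP hd hmax u v euv.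
set d := avg_deg e.
set N := C0 * Num.sqrt d.
have d0 : 0 <= d.
  apply: le_trans hd; apply: mulr_ge0; [exact: ltW | exact: sqrtr_ge0].
have N0 : 0 <= N by apply: mulr_ge0; [exact: ltW | exact: sqrtr_ge0].
have NN : N * N = C0 ^+ 2 * d.
  have hs : Num.sqrt d ^+ 2 = d by rewrite sqr_sqrtr.
  by rewrite /N -{3}hs; ring.
set X := N * N * (K * d).
have Kd0 : 0 <= K * d by apply: mulr_ge0 => //; lra.
have X0 : 0 <= X by rewrite /X; apply: mulr_ge0 => //; apply: mulr_ge0.
have hM : (4 * l + 4)%:R * K * C0 ^+ 2 * d ^+ 2 = 4 * X + 4 * (l%:R * X).
  by rewrite /X NN natrD natrM; ring.
rewrite hM.
have [[S [sSP nS hS]]|hp] := degen (2 * l%:R * N) (Rc_sym e l) (PP e u v N).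
  by case: noP; apply: (no_dense sym irr bip euv l2 N0 sSP nS hS).
have hPP : #|PP e u v N|%:R <= K * d * N.
  apply: le_trans (PP_bound e u v N0) _.
  by apply: ler_wpM2r => //; apply: hmax.
have hp2 : #|pairs (Rc e l) (PP e u v N)|%:R <= 4 * (l%:R * X).
  apply: (le_trans hp).
  have h2 : 0 <= 2 * (2 * l%:R * N).
    apply: mulr_ge0; first lra.
    by apply: mulr_ge0 => //; apply: mulr_ge0; [lra | exact: ler0n].
  apply: le_trans (ler_wpM2l h2 hPP) _.
  by rewrite /X le_eqVlt; apply/orP; left; apply/eqP; ring.
set Cs := counted_tuples e l C0 u v.
set Nu := [set y | e u y]; set Nv := [set y | e v y].
have degvK : (deg e v)%:R <= K * d := hmax v.
have deguK : (deg e u)%:R <= K * d := hmax u.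
pose C1 := [set t in Cs | t.1.1.1 == u].
pose C2 := [set t in Cs | t.1.2 == u].
pose C3 := [set t in Cs | t.1.1.2 == v].
pose C4 := [set t in Cs | t.2 == v].
pose psi := fun pq : (T * T) * (T * T) => (pq.1.1, pq.1.2, pq.2.1, pq.2.2).
have sub : Cs \subset ((C1 :|: C2) :|: (C3 :|: C4)) :|:
                       (psi @: pairs (Rc e l) (PP e u v N)).
  apply/subsetP => -[[[w z] w'] z'] ht; have ht' := ht.
  rewrite /Cs /counted_tuples inE /= in ht'; rewrite !inE /= ht' /=.
  have [wu|wu] := eqVneq w u => //=.
  have [w'u|w'u] := eqVneq w' u => //=.
  have [zv|zv] := eqVneq z v => //=.
  have [z'v|z'v] := eqVneq z' v => //=.
  apply/imsetP; exists ((w, z), (w', z')) => //.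
  have [r uz uz' vw [vw' c1 c2 c3 c4]] := countedP ht.
  have r' := r; case/and4P: r' => _ wz w'z' _.
  by rewrite /pairs !inE /= vw uz wz wu zv c1 c3 vw' uz' w'z' w'u z'v c2 c4 /Rc r.
have bC1 : #|C1|%:R <= X.
  case: (set_0Vmem C1) => [->|[[[[w0 z0] w0'] z0']]]; first by rewrite cards0.
  case/setIdP => h0 /eqP /= w0u.
  have [_ _ _ _ [_ c _ _ _]] := countedP h0; rewrite w0u codeg_self in c.
  have sub1 : C1 \subset setX (setX (setX [set u] Nu) Nv) Nu.
    apply/subsetP => -[[[w z] w'] z'] /setIdP [ht /eqP /= wu].
    have [_ uz uz' _ [vw' _ _ _ _]] := countedP ht.
    by rewrite !inE /= wu eqxx uz vw' uz'.
  have := subset_leq_card sub1; rewrite !cardsX cards1 mul1n -(ler_nat RR) => hc.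
  apply: (le_trans hc); apply: le_trans (prod3 c degvK c) _.
  by rewrite /X /N /d le_eqVlt; apply/orP; left; apply/eqP; ring.
have bC2 : #|C2|%:R <= X.
  case: (set_0Vmem C2) => [->|[[[[w0 z0] w0'] z0']]]; first by rewrite cards0.
  case/setIdP => h0 /eqP /= w0u.
  have [_ _ _ _ [_ _ c _ _]] := countedP h0; rewrite w0u codeg_self in c.
  have sub1 : C2 \subset setX (setX (setX Nv Nu) [set u]) Nu.
    apply/subsetP => -[[[w z] w'] z'] /setIdP [ht /eqP /= wu].
    have [_ uz uz' vw _] := countedP ht.
    by rewrite !inE /= wu eqxx uz vw uz'.
  have := subset_leq_card sub1; rewrite !cardsX cards1 muln1 -(ler_nat RR) => hc.
  apply: (le_trans hc); apply: le_trans (prod3 degvK c c) _.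
  by rewrite /X /N /d le_eqVlt; apply/orP; left; apply/eqP; ring.
have bC3 : #|C3|%:R <= X.
  case: (set_0Vmem C3) => [->|[[[[w0 z0] w0'] z0']]]; first by rewrite cards0.
  case/setIdP => h0 /eqP /= w0u.
  have [_ _ _ _ [_ _ _ c _]] := countedP h0; rewrite w0u codeg_self in c.
  have sub1 : C3 \subset setX (setX (setX Nv [set v]) Nv) Nu.
    apply/subsetP => -[[[w z] w'] z'] /setIdP [ht /eqP /= wu].
    have [_ uz uz' vw [vw' _ _ _ _]] := countedP ht.
    by rewrite !inE /= wu eqxx vw vw' uz'.
  have := subset_leq_card sub1; rewrite !cardsX cards1 muln1 -(ler_nat RR) => hc.
  apply: (le_trans hc); apply: le_trans (prod3 c c deguK) _.
  by rewrite /X /N /d le_eqVlt; apply/orP; left; apply/eqP; ring.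
have bC4 : #|C4|%:R <= X.
  case: (set_0Vmem C4) => [->|[[[[w0 z0] w0'] z0']]]; first by rewrite cards0.
  case/setIdP => h0 /eqP /= w0u.
  have [_ _ _ _ [_ _ _ _ c]] := countedP h0; rewrite w0u codeg_self in c.
  have sub1 : C4 \subset setX (setX (setX Nv Nu) Nv) [set v].
    apply/subsetP => -[[[w z] w'] z'] /setIdP [ht /eqP /= wu].
    have [_ uz uz' vw [vw' _ _ _ _]] := countedP ht.
    by rewrite !inE /= wu eqxx vw vw' uz.
  have := subset_leq_card sub1; rewrite !cardsX cards1 muln1 -(ler_nat RR) => hc.
  apply: (le_trans hc); apply: le_trans (prod3 c deguK c) _.
  by rewrite /X /N /d le_eqVlt; apply/orP; left; apply/eqP; ring.
have hcard : (#|Cs| <= #|C1| + #|C2| + (#|C3| + #|C4|) +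
               #|pairs (Rc e l) (PP e u v N)|)%N.
  apply: (leq_trans (subset_leq_card sub)); apply: (leq_trans (cardU_le _ _)).
  apply: leq_add; last exact: leq_imset_card.
  apply: (leq_trans (cardU_le _ _)); apply: leq_add; exact: cardU_le.
move: hcard; rewrite -(ler_nat RR) !natrD => hcard.
lra.
Qed.
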